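(* Let $\mathcal{O}$ be a strict monoidal category and $\mathcal{B}$ a strict left $\mathcal{O}$-module category. Then the category $\bar{\mathcal{O}}_{\triangleright\mathcal{B}}$ is a monoidal category with respect to the tensor product equal to that of $\mathcal{O}$ on objects and defined on morphisms by $$(\phi\bar\otimes\psi)_X:=(\mathrm{id}_C\otimes\psi_X)\circ\phi_{B\otimes X}=\phi_{D\otimes X}\circ(\mathrm{id}_A\otimes\psi_X)$$ for $\phi\in\mathrm{Hom}_{\bar{\mathcal{O}}_{\triangleright\mathcal{B}}}(A,C)$, $\psi\in\mathrm{Hom}_{\bar{\mathcal{O}}_{\triangleright\mathcal{B}}}(B,D)$, $X\in\mathrm{Ob}\,\mathcal{B}$.
   Context: The action of $\mathcal{O}$ on $\mathcal{B}$ and the tensor product of $\mathcal{O}$ are both written $\otimes$ (with trivial associativity constraints). $\bar{\mathcal{O}}_{\triangleright\mathcal{B}}$ has the objects of $\mathcal{O}$; a morphism $\phi\colon A\to B$ is a family $\{\phi_X\}_{X\in\mathrm{Ob}\,\mathcal{B}}$ of morphisms $\phi_X\in\mathrm{Hom}_\mathcal{B}(A\otimes X,B\otimes X)$ such that $\phi_X\circ(\mathrm{id}_A\otimes\xi)=(\mathrm{id}_B\otimes\xi)\circ\phi_{X'}$ for all $\xi\in\mathrm{Hom}_\mathcal{B}(X',X)$; composition is pointwise, $(\phi\circ\psi)_X=\phi_X\circ\psi_X$. *)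

(* Defs.v *)
From Stdlib Require Import FunctionalExtensionality ProofIrrelevance.
Set Implicit Arguments.
Unset Strict Implicit.

(** Categories with Leibniz equality of morphisms; [comp g f] is g ∘ f. *)
Record Category := {
  Ob :> Type;
  Hom : Ob -> Ob -> Type;
  idm : forall A, Hom A A;
  comp : forall A B C, Hom B C -> Hom A B -> Hom A C;
  comp_id_l : forall A B (f : Hom A B), comp (idm B) f = f;
  comp_id_r : forall A B (f : Hom A B), comp f (idm A) = f;
  comp_assoc : forall A B C D (h : Hom C D) (g : Hom B C) (f : Hom A B),
      comp h (comp g f) = comp (comp h g) f }.
Arguments Hom {c} _ _.
Arguments idm {c} _.
Arguments comp {c A B C} _ _.

Definition cast_hom (C : Category) (A A' B B' : Ob C) (eA : A = A') (eB : B = B')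
  (f : Hom A B) : Hom A' B' :=
  match eA in _ = a, eB in _ = b return Hom a b with eq_refl, eq_refl => f end.

Record IsStrictMonoidal (C : Category) (tob : C -> C -> C) (I : C)
  (tmor : forall A B A' B' : C, Hom A A' -> Hom B B' -> Hom (tob A B) (tob A' B')) : Prop := {
  tmor_id : forall A B : C, tmor _ _ _ _ (idm A) (idm B) = idm (tob A B);
  tmor_comp : forall (A1 A2 A3 B1 B2 B3 : C) (f : Hom A1 A2) (f' : Hom A2 A3)
      (g : Hom B1 B2) (g' : Hom B2 B3),
      tmor _ _ _ _ (comp f' f) (comp g' g) = comp (tmor _ _ _ _ f' g') (tmor _ _ _ _ f g);
  tob_assoc : forall A B D : C, tob (tob A B) D = tob A (tob B D);
  tob_unit_l : forall A : C, tob I A = A;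
  tob_unit_r : forall A : C, tob A I = A;
  tmor_assoc : forall (A A' B B' D D' : C) (f : Hom A A') (g : Hom B B') (h : Hom D D'),
      tmor _ _ _ _ (tmor _ _ _ _ f g) h =
      cast_hom (eq_sym (tob_assoc A B D)) (eq_sym (tob_assoc A' B' D')) (tmor _ _ _ _ f (tmor _ _ _ _ g h));
  tmor_unit_l : forall (A A' : C) (f : Hom A A'),
      tmor _ _ _ _ (idm I) f = cast_hom (eq_sym (tob_unit_l A)) (eq_sym (tob_unit_l A')) f;
  tmor_unit_r : forall (A A' : C) (f : Hom A A'),
      tmor _ _ _ _ f (idm I) = cast_hom (eq_sym (tob_unit_r A)) (eq_sym (tob_unit_r A')) f }.

Record StrictMonoidalCategory := {
  smc_cat :> Category;
  smc_tob : smc_cat -> smc_cat -> smc_cat;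
  smc_I : smc_cat;
  smc_tmor : forall A B A' B' : smc_cat,
      Hom A A' -> Hom B B' -> Hom (smc_tob A B) (smc_tob A' B');
  smc_ax : @IsStrictMonoidal smc_cat smc_tob smc_I smc_tmor }.
Arguments smc_tob {s} _ _.
Arguments smc_tmor {s A B A' B'} _ _.

Record StrictLeftModule (O : StrictMonoidalCategory) := {
  mod_cat :> Category;
  act_ob : O -> mod_cat -> mod_cat;
  act_mor : forall (A A' : O) (X X' : mod_cat),
      Hom A A' -> Hom X X' -> Hom (act_ob A X) (act_ob A' X');
  act_id : forall (A : O) (X : mod_cat), act_mor (idm A) (idm X) = idm (act_ob A X);
  act_comp : forall (A1 A2 A3 : O) (X1 X2 X3 : mod_cat) (f : Hom A1 A2) (f' : Hom A2 A3)
      (g : Hom X1 X2) (g' : Hom X2 X3),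
      act_mor (comp f' f) (comp g' g) = comp (act_mor f' g') (act_mor f g);
  act_assoc_ob : forall (A B : O) (X : mod_cat),
      act_ob (smc_tob A B) X = act_ob A (act_ob B X);
  act_unit_ob : forall X : mod_cat, act_ob (smc_I O) X = X;
  act_assoc_mor : forall (A A' B B' : O) (X X' : mod_cat)
      (f : Hom A A') (g : Hom B B') (h : Hom X X'),
      act_mor (smc_tmor f g) h =
      cast_hom (eq_sym (act_assoc_ob A B X)) (eq_sym (act_assoc_ob A' B' X'))
               (act_mor f (act_mor g h));
  act_unit_mor : forall (X X' : mod_cat) (h : Hom X X'),
      act_mor (idm (smc_I O)) h =
      cast_hom (eq_sym (act_unit_ob X)) (eq_sym (act_unit_ob X')) h }.
Arguments act_ob {O s} _ _.
Arguments act_mor {O s A A' X X'} _ _.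
Arguments act_assoc_ob {O s} _ _ _.

Definition ObarHom (O : StrictMonoidalCategory) (M : StrictLeftModule O) (A C : O) : Type :=
  { phi : forall X : M, Hom (act_ob A X) (act_ob C X) |
    forall (X X' : M) (xi : Hom X' X),
      comp (phi X) (act_mor (idm A) xi) = comp (act_mor (idm C) xi) (phi X') }.

Section Obar.
Variables (O : StrictMonoidalCategory) (M : StrictLeftModule O).

Definition Obar_id (A : O) : ObarHom M A A.
Proof.
  exists (fun X => idm (act_ob A X)).
  intros X X' xi. now rewrite comp_id_l, comp_id_r.
Defined.

Definition Obar_comp (A B C : O) (phi : ObarHom M B C) (psi : ObarHom M A B) : ObarHom M A C.
Proof.
  exists (fun X => comp (proj1_sig phi X) (proj1_sig psi X)).
  intros X X' xi.
  rewrite <- comp_assoc, (proj2_sig psi), comp_assoc, (proj2_sig phi), comp_assoc.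
  reflexivity.
Defined.

Lemma ObarHom_eq (A C : O) (phi psi : ObarHom M A C) :
  (forall X, proj1_sig phi X = proj1_sig psi X) -> phi = psi.
Proof.
  destruct phi as [f Hf], psi as [g Hg]; simpl; intro H.
  apply functional_extensionality_dep in H. subst g.
  f_equal. apply proof_irrelevance.
Qed.

Definition Obar : Category.
Proof.
  refine {| Ob := Ob O; Hom := ObarHom M; idm := Obar_id; comp := Obar_comp |}.
  - intros A B f; apply ObarHom_eq; intro X; simpl; apply comp_id_l.
  - intros A B f; apply ObarHom_eq; intro X; simpl; apply comp_id_r.
  - intros A B C D h g f; apply ObarHom_eq; intro X; simpl; apply comp_assoc.
Defined.
End Obar.

(* Main.v *)
Require Import Defs.
From Stdlib Require Import Eqdep FunctionalExtensionality ProofIrrelevance.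
Set Implicit Arguments.
Unset Strict Implicit.

Definition hq (C : Category) (a b a' b' : Ob C) (f : Hom a b) (g : Hom a' b') : Prop :=
  existT (fun p : Ob C * Ob C => Hom (fst p) (snd p)) (a, b) f =
  existT (fun p : Ob C * Ob C => Hom (fst p) (snd p)) (a', b') g.
Arguments hq {C a b a' b'} f g.

Lemma hq_trans C (a b a' b' a'' b'' : Ob C) (f : Hom a b) (g : Hom a' b') (h : Hom a'' b'') :
  hq f g -> hq g h -> hq f h.
Proof. unfold hq; intros; congruence. Qed.
Lemma hq_sym C (a b a' b' : Ob C) (f : Hom a b) (g : Hom a' b') : hq f g -> hq g f.
Proof. unfold hq; intros; congruence. Qed.
Lemma eq_hq C (a b : Ob C) (f g : Hom a b) : f = g -> hq f g.
Proof. intros ->; reflexivity. Qed.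
Lemma hq_eq C (a b : Ob C) (f g : Hom a b) : hq f g -> f = g.
Proof. unfold hq; intro H. exact (EqdepTheory.inj_pair2 _ _ _ _ _ H). Qed.
Lemma hq_cast C (a b a' b' : Ob C) (ea : a = a') (eb : b = b') (f : Hom a b) :
  hq (cast_hom ea eb f) f.
Proof. destruct ea, eb; reflexivity. Qed.
Lemma hq_ends C (a b a' b' : Ob C) (f : Hom a b) (g : Hom a' b') :
  hq f g -> a = a' /\ b = b'.
Proof. unfold hq; intro H. apply (f_equal (@projT1 _ _)) in H. simpl in H.
  injection H; auto. Qed.
Lemma hq_comp C (a b c a' b' c' : Ob C) (f : Hom a b) (g : Hom b c) (f' : Hom a' b') (g' : Hom b' c') :
  hq g g' -> hq f f' -> hq (comp g f) (comp g' f').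
Proof.
  intros H1 H2. destruct (hq_ends H1) as [-> ->]. destruct (hq_ends H2) as [-> _].
  apply hq_eq in H1. apply hq_eq in H2. subst. reflexivity.
Qed.
Lemma hq_act (O : StrictMonoidalCategory) (M : StrictLeftModule O) (A A' A2 A2' : O) (X X' X2 X2' : M)
  (f : Hom A A') (f2 : Hom A2 A2') (k : Hom X X') (k2 : Hom X2 X2') :
  hq f f2 -> hq k k2 -> hq (act_mor f k) (act_mor f2 k2).
Proof.
  intros H1 H2. destruct (hq_ends H1) as [-> ->]. destruct (hq_ends H2) as [-> ->].
  apply hq_eq in H1. apply hq_eq in H2. subst. reflexivity.
Qed.
Lemma hq_shift (O : StrictMonoidalCategory) (M : StrictLeftModule O) (A C : O)
  (phi : ObarHom M A C) (Y Y' : M) : Y = Y' -> hq (proj1_sig phi Y) (proj1_sig phi Y').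
Proof. intros ->; reflexivity. Qed.
Lemma hq_obarcast (O : StrictMonoidalCategory) (M : StrictLeftModule O) (A A' C C' : O)
  (e : A = A') (e' : C = C') (phi : @Hom (Obar M) A C) (X : M) :
  hq (proj1_sig (@cast_hom (Obar M) A A' C C' e e' phi) X) (proj1_sig phi X).
Proof. destruct e, e'; reflexivity. Qed.

Lemma hq_idm C (a a' : Ob C) : a = a' -> hq (idm a) (idm a').
Proof. intros ->; reflexivity. Qed.

Section T.
Variables (O : StrictMonoidalCategory) (M : StrictLeftModule O).

Definition Tcomp (A B C D : O) (phi : ObarHom M A C) (psi : ObarHom M B D) (X : M) :
  Hom (act_ob (smc_tob A B) X) (act_ob (smc_tob C D) X) :=
  cast_hom (eq_sym (act_assoc_ob A B X)) (eq_sym (act_assoc_ob C D X))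
    (comp (act_mor (idm C) (proj1_sig psi X)) (proj1_sig phi (act_ob B X))).

Lemma act_idm_comp (A : O) (X Y Z : M) (g : Hom Y Z) (f : Hom X Y) :
  comp (act_mor (idm A) g) (act_mor (idm A) f) = act_mor (idm A) (comp g f).
Proof. rewrite <- act_comp, comp_id_l. reflexivity. Qed.

Lemma idm_tob (A B : O) (X X' : M) (xi : Hom X X') :
  hq (act_mor (idm (smc_tob A B)) xi) (act_mor (idm A) (act_mor (idm B) xi)).
Proof.
  rewrite <- (tmor_id (smc_ax O)). rewrite act_assoc_mor. apply hq_cast.
Qed.

Lemma Tnat (A B C D : O) (phi : ObarHom M A C) (psi : ObarHom M B D) :
  forall (X X' : M) (xi : Hom X' X),
    comp (Tcomp phi psi X) (act_mor (idm (smc_tob A B)) xi) =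
    comp (act_mor (idm (smc_tob C D)) xi) (Tcomp phi psi X').
Proof.
  intros X X' xi. apply hq_eq. unfold Tcomp.
  eapply hq_trans. { apply hq_comp. apply hq_cast. apply idm_tob. }
  eapply hq_trans. 2:{ apply hq_sym. apply hq_comp. apply idm_tob. apply hq_cast. }
  apply eq_hq.
  rewrite <- comp_assoc, (proj2_sig phi), comp_assoc, act_idm_comp, (proj2_sig psi).
  rewrite <- act_idm_comp, comp_assoc. reflexivity.
Qed.

Definition Tmor (A B C D : Obar M) (phi : @Hom (Obar M) A C) (psi : @Hom (Obar M) B D) :
  @Hom (Obar M) (smc_tob A B) (smc_tob C D) :=
  exist _ (Tcomp phi psi) (Tnat phi psi).

End T.

Theorem proposition4p15 (O : StrictMonoidalCategory) (M : StrictLeftModule O) :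
  exists tmor : forall A B C D : Obar M,
      @Hom (Obar M) A C -> @Hom (Obar M) B D ->
      @Hom (Obar M) (smc_tob A B) (smc_tob C D),
    @IsStrictMonoidal (Obar M) (@smc_tob O) (smc_I O) tmor /\
    forall (A B C D : Obar M) (phi : @Hom (Obar M) A C) (psi : @Hom (Obar M) B D) (X : M),
      proj1_sig (tmor A B C D phi psi) X =
        cast_hom (eq_sym (act_assoc_ob A B X)) (eq_sym (act_assoc_ob C D X))
          (comp (act_mor (@idm O C) (proj1_sig psi X)) (proj1_sig phi (act_ob B X))) /\
      proj1_sig (tmor A B C D phi psi) X =
        cast_hom (eq_sym (act_assoc_ob A B X)) (eq_sym (act_assoc_ob C D X))
          (comp (proj1_sig phi (act_ob D X)) (act_mor (@idm O A) (proj1_sig psi X))).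
Proof.
  exists (@Tmor O M). split.
  2:{ intros A B C D phi psi X. split; [reflexivity|]. simpl. unfold Tcomp.
      f_equal. symmetry. apply (proj2_sig phi). }
  unshelve econstructor.
  - exact (tob_assoc (smc_ax O)).
  - exact (tob_unit_l (smc_ax O)).
  - exact (tob_unit_r (smc_ax O)).
  - intros A B. apply ObarHom_eq. intro X. simpl. unfold Tcomp.
    apply hq_eq. eapply hq_trans. apply hq_cast.
    rewrite act_id, comp_id_r. apply hq_idm. symmetry. apply act_assoc_ob.
  - intros A1 A2 A3 B1 B2 B3 f f' g g'. apply ObarHom_eq. intro X. simpl. unfold Tcomp.
    apply hq_eq. eapply hq_trans. apply hq_cast.
    eapply hq_trans. 2:{ apply hq_sym. apply hq_comp; apply hq_cast. }
    apply eq_hq. simpl.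
    rewrite <- act_idm_comp.
    rewrite <- !comp_assoc. f_equal. rewrite !comp_assoc. f_equal.
    symmetry. apply (proj2_sig f').
  - intros A A' B B' D D' f g h. apply ObarHom_eq. intro X.
    apply hq_eq. eapply hq_trans. 2:{ apply hq_sym. apply hq_obarcast. }
    simpl. unfold Tcomp.
    eapply hq_trans. apply hq_cast.
    eapply hq_trans. { apply hq_comp. apply idm_tob. apply hq_cast. }
    eapply hq_trans. 2:{ apply hq_sym. eapply hq_trans. apply hq_cast.
      apply hq_comp. apply hq_act. apply eq_hq; reflexivity. apply hq_cast.
      apply hq_shift. apply (act_assoc_ob B D X). }
    apply eq_hq. rewrite comp_assoc, act_idm_comp. reflexivity.
  - intros A A' f. apply ObarHom_eq. intro X.
    apply hq_eq. eapply hq_trans. 2:{ apply hq_sym. apply hq_obarcast. }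
    simpl. unfold Tcomp.
    eapply hq_trans. apply hq_cast. rewrite comp_id_r, act_unit_mor. apply hq_cast.
  - intros A A' f. apply ObarHom_eq. intro X.
    apply hq_eq. eapply hq_trans. 2:{ apply hq_sym. apply hq_obarcast. }
    simpl. unfold Tcomp.
    eapply hq_trans. apply hq_cast. rewrite act_id, comp_id_l.
    apply hq_shift. apply act_unit_ob.
Qed.
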